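(* Let $B$ be a connected building set on $[n]$ and write $F(P_B)=\sum_{\alpha\models n}\zeta_\alpha(B)M_\alpha$. Then $$\sum_{\alpha\models n}(-1)^{k(\alpha)}\zeta_\alpha(B)=(-1)^nf_0(P_B),$$ where $f_0(P_B)$ is the number of vertices of $P_B$. Equivalently, if $\chi(P_B,m)=\sum_{\alpha\models n}\zeta_\alpha(B)\binom{m}{k(\alpha)}$ (a polynomial in $m$), then $\chi(P_B,-1)=(-1)^nf_0(P_B)$.
   Context: A building set on a finite set $V$ is a collection $B$ of nonempty subsets of $V$ such that $\{v\}\in B$ for all $v\in V$ and such that $I,J\in B$, $I\cap J\neq\emptyset$ imply $I\cup J\in B$; it is connected if $V\in B$. The nestohedron of $B$ is $P_B=\sum_{I\in B}\mathrm{Conv}\{e_i: i\in I\}\subset\mathbb{R}^V$. For a convex polytope $Q\subset\mathbb{R}^n$, $f:[n]\to\mathbb{N}=\{1,2,\dots\}$ is $Q$-generic if $x\mapsto\sum_i f(i)x_i$ attains its maximum over $Q$ at a unique point, and $F(Q)=\sum_{f\ Q\text{-generic}}x_{f(1)}\cdots x_{f(n)}$. For a composition $\alpha=(a_1,\dots,a_k)\models n$ of length $k(\alpha)=k$, $M_\alpha=\sum_{i_1<\dots<i_k}x_{i_1}^{a_1}\cdots x_{i_k}^{a_k}$. *)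

(* Defs.v *)
From HB Require Import structures.
From mathcomp Require Import all_boot all_order all_algebra.
From Stdlib Require Import ClassicalEpsilon.
Set Implicit Arguments. Unset Strict Implicit. Unset Printing Implicit Defensive.
Import Order.TTheory GRing.Theory Num.Theory.
Local Open Scope ring_scope.

Definition pb (P : Prop) : bool :=
  if excluded_middle_informative P then true else false.

Definition building_set (n : nat) (B : {set {set 'I_n}}) : Prop :=
  (forall v : 'I_n, [set v] \in B) /\
  (forall I, I \in B -> I != set0) /\
  (forall I J, I \in B -> J \in B -> I :&: J != set0 -> I :|: J \in B).

Definition connected_bs (n : nat) (B : {set {set 'I_n}}) : Prop := [set: 'I_n] \in B.

Section Poly.
Variables (R : realFieldType) (n : nat).
Notation pt := {ffun 'I_n -> R}.

Definition lin (c : 'I_n -> R) (x : pt) : R := \sum_(i < n) c i * x i.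

Definition in_conv (T : finType) (A : {set T}) (p : T -> pt) (x : pt) : Prop :=
  exists lam : T -> R, (forall t, t \in A -> 0 <= lam t) /\
    \sum_(t in A) lam t = 1 /\ (forall i, x i = \sum_(t in A) lam t * p t i).

Definition unitv (j : 'I_n) : pt := [ffun k => (k == j)%:R].

Definition simplex (I : {set 'I_n}) (x : pt) : Prop := in_conv I unitv x.

Definition nestohedron (B : {set {set 'I_n}}) (x : pt) : Prop :=
  exists y : {set 'I_n} -> pt, (forall I, I \in B -> simplex I (y I)) /\
    (forall i, x i = \sum_(I in B) y I i).

Definition generic (Q : pt -> Prop) (f : 'I_n -> nat) : Prop :=
  exists x, Q x /\ forall y, Q y -> y <> x ->
    lin (fun i => (f i)%:R) y < lin (fun i => (f i)%:R) x.

Definition is_vertex (Q : pt -> Prop) (x : pt) : Prop :=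
  Q x /\ exists c : 'I_n -> R, forall y, Q y -> y <> x -> lin c y < lin c x.
End Poly.

Definition is_comp (n : nat) (s : seq nat) : bool :=
  all (fun a => 0 < a)%N s && (sumn s == n).

Definition comps (n : nat) : seq (seq nat) :=
  [seq s <- flatten [seq [seq map val (tval t) | t <- enum {: k.-tuple 'I_n.+1}]
                   | k <- iota 0 n.+1] | is_comp n s].

(* coefficient of the monomial x_1^{e_0} ... x_N^{e_{N-1}} in M_alpha *)
Definition Mcoef (N : nat) (e : 'I_N -> nat) (a : seq nat) : int :=
  (([seq x <- map e (enum 'I_N) | x != 0%N] == a) : nat)%:Z.

(* Main.v *)
Require Import Defs.
From HB Require Import structures.
From mathcomp Require Import all_boot all_order all_algebra.
From mathcomp Require Import zify.
From Stdlib Require Import ClassicalEpsilon.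
Import Order.TTheory GRing.Theory Num.Theory.
Local Open Scope ring_scope.

Module Helpers.
Set Implicit Arguments. Unset Strict Implicit. Unset Printing Implicit Defensive.

Section PS.
Variable T : finType.
Lemma powerset_alt (M : {set T}) (m : T) : m \in M ->
  \sum_(U in powerset M) (-1) ^+ #|U| = 0 :> int.
Proof.
move=> mM.
pose phi (U : {set T}) := if m \in U then U :\ m else m |: U.
have phiK : involutive phi.
  move=> U; rewrite /phi; case: (boolP (m \in U)) => mU.
    by rewrite !inE eqxx /= setD1K.
  by rewrite !inE eqxx /= setU1K.
have Pphi U : (phi U \in powerset M) = (U \in powerset M).
  rewrite !inE /phi; case: (boolP (m \in U)) => mU.
    apply/idP/idP => H.
      by rewrite -(setD1K mU) subUset sub1set mM H.
    exact: subset_trans (subD1set _ _) H.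
  by rewrite subUset sub1set mM.
have Fphi U : (-1) ^+ #|phi U| = - (-1) ^+ #|U| :> int.
  rewrite /phi; case: (boolP (m \in U)) => mU.
    by rewrite [in RHS](cardsD1 m U) mU exprS mulN1r opprK.
  by rewrite cardsU1 mU exprS mulN1r.
set S := \sum_(U in _) _.
have : S = - S.
  rewrite {2}/S -sumrN /S (reindex_inj (can_inj phiK)) /=.
  apply: eq_big => U; first by rewrite Pphi.
  by move=> _; rewrite Fphi.
by move/eqP; rewrite -addr_eq0 -mulr2n mulrn_eq0 => /eqP.
Qed.
End PS.

Section Recip.
Variables (T : finType) (K : nat) (rl : rel T) (h : T -> nat).
Hypothesis hK : (#|T| <= K)%N.
Hypothesis hh : forall a b, rl a b -> (h b < h a)%N.

Definition img (g : {ffun T -> 'I_K.+1}) (X : {set T}) (k : nat) :=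
  [forall i : 'I_K.+1, (i < k)%N == [exists t in X, g t == i]].

Definition SP (X : {set T}) (k : nat) := [set g : {ffun T -> 'I_K.+1} |
  [&& [forall t, (t \notin X) ==> (g t == ord0)], img g X k &
      [forall a, forall b, [&& a \in X, b \in X & rl a b] ==> (g b < g a)%N]]].

Definition MX (X : {set T}) := [set b in X | [forall a in X, ~~ rl a b]].

Lemma MX_nonempty (X : {set T}) : X != set0 -> MX X != set0.
Proof.
case/set0Pn => x0 Hx0.
case: (arg_maxnP h Hx0) => b Hb Hmax.
apply/set0Pn; exists b; rewrite inE; apply/andP; split; first exact: Hb.
apply/forallP => a; apply/implyP => Ha; apply/negP => /hh.
by have := Hmax a Ha; lia.
Qed.

Lemma SP0 (X : {set T}) : #|SP X 0| = (X == set0).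
Proof.
case: (eqVneq X set0) => [->|/set0Pn [x Hx]] /=.
  apply/eqP/cards1P; exists [ffun => ord0].
  apply/setP => g; rewrite !inE.
  apply/idP/idP.
    case/and3P => /forallP H1 _ _; apply/eqP/ffunP => t.
    by rewrite ffunE; apply/eqP; have := H1 t; rewrite inE.
  move/eqP => ->; apply/and3P; split.
  - by apply/forallP => t; rewrite ffunE eqxx implybT.
  - by apply/forallP => i; rewrite ltn0 eq_sym eqbF_neg; apply/existsPn => t; rewrite inE.
  - by apply/forallP => a; apply/forallP => b; rewrite inE.
apply/eqP; rewrite cards_eq0; apply/eqP/setP => g; rewrite !inE.
apply/negP => /and3P [_ /forallP H _].
have := H (g x); rewrite ltn0 eq_sym eqbF_neg; case/negP.
by apply/existsP; exists x; rewrite Hx eqxx.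
Qed.

Lemma SP_big (Y : {set T}) : (#|Y| < K)%N -> SP Y K = set0.
Proof.
move=> HY; apply/setP => g; rewrite !inE; apply/negP => /and3P [_ /forallP H _].
have sub : [set widen_ord (leqnSn K) i | i : 'I_K] \subset g @: Y.
  apply/subsetP => _ /imsetP [i _ ->].
  have := H (widen_ord (leqnSn K) i); rewrite /= ltn_ord eq_sym => /eqP/existsP [t /andP [Ht /eqP Hg]].
  by apply/imsetP; exists t.
have cW : #|[set widen_ord (leqnSn K) i | i : 'I_K]| = K.
  rewrite card_imset ?card_ord // => i j E; apply/val_inj.
  by have := congr1 val E.
have := subset_leq_card sub; rewrite cW => H2.
have := leq_trans H2 (leq_imset_card g Y); lia.
Qed.

Lemma SP_step (X : {set T}) k : (k < K)%N ->
  #|SP X k.+1| = (\sum_(U in powerset (MX X) | U != set0) #|SP (X :\: U) k|)%N.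
Proof.
move=> kK.
set kk : 'I_K.+1 := inord k.
have kkv : kk = k :> nat by rewrite /kk inordK //; lia.
pose top (g : {ffun T -> 'I_K.+1}) := [set t in X | g t == kk].
rewrite -sum1_card (partition_big top (fun U => (U \in powerset (MX X)) && (U != set0))) /=; last first.
  move=> g; rewrite inE => /and3P [_ /forallP Himg /forallP Hstr].
  apply/andP; split.
    rewrite inE; apply/subsetP => t; rewrite !inE => /andP [Ht /eqP Hgt].
    rewrite Ht /=; apply/forallP => a; apply/implyP => Ha; apply/negP => Hr.
    have := Hstr a; move/forallP/(_ t); rewrite Ha Ht Hr /= Hgt => Hlt.
    have := Himg (g a); case: existsP => [_|[]]; last by exists a; rewrite Ha eqxx.
    by move/eqP; move: Hlt; rewrite kkv; lia.
  have := Himg kk; rewrite kkv ltnSn eq_sym => /eqP/existsP [t /andP [Ht Hg]].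
  by apply/set0Pn; exists t; rewrite inE Ht Hg.
apply: eq_bigr => U /andP [].
rewrite inE => /subsetP UM U0.
have UX : U \subset X by apply/subsetP => t /UM; rewrite inE => /andP [].
pose f (g' : {ffun T -> 'I_K.+1}) := [ffun t => if t \in U then kk else g' t].
have fim : [set g in SP X k.+1 | top g == U] = f @: SP (X :\: U) k.
  apply/setP => g; rewrite !inE; apply/idP/idP.
    case/andP => /and3P [/forallP Hout /forallP Himg /forallP Hstr] /eqP Htop.
    apply/imsetP; exists [ffun t => if t \in U then ord0 else g t]; last first.
      apply/ffunP => t; rewrite !ffunE; case: (boolP (t \in U)) => // tU.
      by move: tU; rewrite -Htop inE => /andP [_ /eqP].
    rewrite inE; apply/and3P; split.
    - apply/forallP => t; apply/implyP => Ht; rewrite ffunE; case: (boolP (t \in U)) => tU //.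
      have tX : t \notin X by move: Ht; rewrite !inE tU.
      by have := Hout t; rewrite tX.
    - apply/forallP => i; apply/eqP; apply/idP/idP.
        move=> ik; have := Himg i; rewrite ltnS (ltnW ik) eq_sym => /eqP/existsP [t /andP [Ht /eqP Hg]].
        apply/existsP; exists t; rewrite ffunE !inE Ht andbT.
        have tU : t \notin U.
          rewrite -Htop inE Ht /= Hg; apply/eqP => E; move: ik; rewrite E kkv; lia.
        by rewrite tU (negbTE tU) Hg eqxx.
      case/existsP => t /andP []; rewrite !inE ffunE => /andP [tU tX].
      rewrite (negbTE tU) => /eqP Hg.
      have := Himg i; rewrite eq_sym; case: existsP => [_|[]]; last by exists t; rewrite tX Hg eqxx.
      move/eqP/esym; rewrite ltnS leq_eqVlt => /orP [/eqP E|//].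
      move: tU; rewrite -Htop inE tX /= Hg; case/negP; apply/eqP/val_inj; by rewrite /= E kkv.
    - apply/forallP => a; apply/forallP => b; rewrite !inE !ffunE.
      apply/implyP => /and3P [/andP [aU aX] /andP [bU bX] r].
      rewrite (negbTE aU) (negbTE bU).
      by have := Hstr a; move/forallP/(_ b); rewrite aX bX r.
  case/imsetP => g' ; rewrite inE => /and3P [/forallP Hout /forallP Himg /forallP Hstr] ->.
  have g'lt t : t \in X :\: U -> (g' t < k)%N.
    move=> Ht; have := Himg (g' t); rewrite eq_sym; case: existsP => [_|[]]; last by exists t; rewrite Ht eqxx.
    by move/eqP.
  have g'U t : t \in U -> g' t = ord0.
    by move=> tU; apply/eqP; have := Hout t; rewrite !inE tU.
  apply/andP; split; last first.
    apply/eqP/setP => t; rewrite !inE ffunE.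
    case: (boolP (t \in U)) => tU; first by rewrite eqxx andbT (subsetP UX).
    apply/negP => /andP [tX /eqP E].
    by have := g'lt t; rewrite !inE tU tX E kkv ltnn => /(_ isT).
  apply/and3P; split.
  - apply/forallP => t; apply/implyP => tX; rewrite ffunE.
    have tU : t \notin U by apply/negP => /(subsetP UX); rewrite (negbTE tX).
    by rewrite (negbTE tU); have := Hout t; rewrite !inE (negbTE tX) andbF.
  - apply/forallP => i; apply/eqP; apply/idP/idP.
      rewrite ltnS leq_eqVlt => /orP [/eqP E|ik].
        case/set0Pn: U0 => t tU; apply/existsP; exists t; rewrite ffunE tU (subsetP UX) //=.
        by apply/eqP/val_inj; rewrite /= kkv E.
      have := Himg i; rewrite ik eq_sym => /eqP/existsP [t /andP [Ht /eqP Hg]].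
      apply/existsP; exists t; move: Ht; rewrite !inE ffunE => /andP [tU tX].
      by rewrite tX (negbTE tU) Hg eqxx.
    case/existsP => t /andP [tX]; rewrite ffunE; case: ifP => tU /eqP <-; first by rewrite kkv.
    by apply: ltnW; apply: g'lt; rewrite !inE tU tX.
  - apply/forallP => a; apply/forallP => b; rewrite !ffunE; apply/implyP => /and3P [aX bX r].
    case: (boolP (b \in U)) => bU.
      have := UM _ bU; rewrite inE => /andP [_ /forallP /(_ a)]; rewrite aX r //.
    have bXU : b \in X :\: U by rewrite !inE bU bX.
    case: (boolP (a \in U)) => aU; first by rewrite kkv; apply: g'lt.
    have := Hstr a; move/forallP/(_ b); rewrite !inE aU aX bU bX r //.
rewrite sum1dep_card.
rewrite fim card_in_imset //.
move=> g1 g2; rewrite !inE => /and3P [/forallP H1 _ _] /and3P [/forallP H2 _ _] E.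
apply/ffunP => t; have := congr1 (fun g : {ffun T -> 'I_K.+1} => g t) E; rewrite /f !ffunE.
case: ifP => // tU _.
have := H1 t; have := H2 t; rewrite !inE tU /= => /eqP -> /eqP -> //.
Qed.

Definition Salt X : int := \sum_(k < K.+1) (-1) ^+ k * (#|SP X k|)%:Z.

Lemma signB (a b : nat) : (b <= a)%N -> (-1) ^+ (a - b) = (-1) ^+ a * (-1) ^+ b :> int.
Proof.
move=> H; rewrite -{2}(subnK H) exprD -mulrA -exprD addnn -muln2 exprM sqrr_sign mulr1 //.
Qed.

Lemma Salt_rec (X : {set T}) : Salt X =
  (X == set0)%:Z - \sum_(U in powerset (MX X) | U != set0) Salt (X :\: U).
Proof.
rewrite {1}/Salt big_ord_recl /= expr0 mul1r SP0.
congr (_ + _).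
have E : forall k : 'I_K, (-1) ^+ (bump 0 k) * (#|SP X (bump 0 k)|)%:Z =
   - \sum_(U in powerset (MX X) | U != set0) ((-1) ^+ k * (#|SP (X :\: U) k|)%:Z).
  move=> k; rewrite /bump /= add1n SP_step // -natz natr_sum mulr_sumr -sumrN.
  by apply: eq_bigr => U _; rewrite natz exprS mulN1r mulNr.
rewrite (eq_bigr _ (fun k _ => E k)) sumrN exchange_big /=; congr (- _).
apply: eq_bigr => U /andP [HU U0].
rewrite /Salt big_ord_recr /= SP_big ?cards0 ?mulr0 ?addr0 //.
have UX : U \subset X.
  apply: subset_trans (_ : MX X \subset X); first by move: HU; rewrite inE.
  by apply/subsetP => t; rewrite inE => /andP [].
rewrite cardsD (setIidPr UX).
case/set0Pn: U0 => u Hu.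
have : (#|X| <= K)%N by apply: leq_trans (max_card _) hK.
have : (0 < #|U|)%N by apply/card_gt0P; exists u.
have : (#|U| <= #|X|)%N by apply: subset_leq_card.
lia.
Qed.

Lemma recip (X : {set T}) : Salt X = (-1) ^+ #|X|.
Proof.
have [m Hm] := ubnP #|X|; elim: m X Hm => // m IH X HX.
rewrite Salt_rec.
have MXX : MX X \subset X by apply/subsetP => t; rewrite inE => /andP [].
case: (eqVneq X set0) => [X0|Xn0].
  rewrite big1 ?subr0; first by rewrite X0 cards0.
  move=> U /andP [HU U0]; exfalso; move/negP: U0; apply.
  rewrite -subset0 -X0; apply: subset_trans MXX; by move: HU; rewrite inE.
rewrite sub0r.
have E : forall U, (U \in powerset (MX X)) && (U != set0) ->
    Salt (X :\: U) = (-1) ^+ #|X| * (-1) ^+ #|U|.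
  move=> U /andP [HU U0].
  have UX : U \subset X by apply: subset_trans MXX; move: HU; rewrite inE.
  have HUX : #|X :\: U| = (#|X| - #|U|)%N by rewrite cardsD (setIidPr UX).
  rewrite IH HUX ?signB //; first exact: subset_leq_card.
  case/set0Pn: U0 => u Hu.
  have : (0 < #|U|)%N by apply/card_gt0P; exists u.
  have : (#|U| <= #|X|)%N by apply: subset_leq_card.
  lia.
rewrite (eq_bigr _ E) -mulr_sumr.
have [x0 Hx0] := set0Pn _ (MX_nonempty Xn0).
have := powerset_alt Hx0; rewrite (bigD1 set0) ?inE ?sub0set //= cards0 expr0 => H.
have -> : \sum_(i in powerset (MX X) | i != set0) (-1) ^+ #|i| = -1 :> int.
  by move/eqP: H; rewrite addrC addr_eq0 => /eqP.
by rewrite mulrN1 opprK.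
Qed.

End Recip.

Section Geo.
Variables (R : realFieldType) (n : nat) (B : {set {set 'I_n}}).
Hypothesis Bne : forall I, I \in B -> I != set0.
Notation pt := {ffun 'I_n -> R}.
Local Notation uv := (unitv R).

Definition smax (c : 'I_n -> R) (I : {set 'I_n}) (m : 'I_n) : bool :=
  (m \in I) && [forall j in I, (j != m) ==> (c j < c m)].
Definition goodc (c : 'I_n -> R) := [forall I in B, [exists m, smax c I m]].
Definition mu (c : 'I_n -> R) : {ffun {set 'I_n} -> option 'I_n} :=
  [ffun I => if I \in B then [pick m | smax c I m] else None].
Definition yOf (mu0 : {ffun {set 'I_n} -> option 'I_n}) (I : {set 'I_n}) : pt :=
  [ffun k => ((mu0 I == Some k) : nat)%:R].
Definition vertOf (mu0 : {ffun {set 'I_n} -> option 'I_n}) : pt :=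
  [ffun k => \sum_(I in B) yOf mu0 I k].

Lemma smax_uniq c I m1 m2 : smax c I m1 -> smax c I m2 -> m1 = m2.
Proof.
case/andP => H1 /forallP F1 /andP [H2 /forallP F2].
apply/eqP; apply/negP => /negP ne.
have := F1 m2; rewrite H2 eq_sym ne /= => lt1.
have := F2 m1; rewrite H1 ne /= => lt2.
by have := lt_trans lt1 lt2; rewrite ltxx.
Qed.

Lemma mu_some c I m : I \in B -> smax c I m -> mu c I = Some m.
Proof.
move=> IB Hm; rewrite ffunE IB; case: pickP => [m' Hm'|H].
  by rewrite (smax_uniq Hm' Hm).
by have := H m; rewrite Hm.
Qed.

Lemma yOf_unit (mu0 : {ffun {set 'I_n} -> option 'I_n}) I m : mu0 I = Some m -> yOf mu0 I = uv m.
Proof. by move=> E; apply/ffunP => k; rewrite !ffunE E /= eq_sym. Qed.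

Lemma lin_unitv (c : 'I_n -> R) t : lin c (uv t) = c t.
Proof.
rewrite /lin (bigD1 t) //= big1 ?addr0; first by rewrite ffunE eqxx mulr1.
by move=> i ne; rewrite ffunE (negbTE ne) mulr0.
Qed.

Lemma lin_comb (T : finType) (A : {set T}) (lam : T -> R) (p : T -> pt) (c : 'I_n -> R) (y : pt) :
  (forall i, y i = \sum_(t in A) lam t * p t i) ->
  lin c y = \sum_(t in A) lam t * lin c (p t).
Proof.
move=> Hy; rewrite /lin.
under eq_bigr do rewrite Hy mulr_sumr.
rewrite exchange_big /=.
apply: eq_bigr => t _; rewrite mulr_sumr; apply: eq_bigr => i _.
by rewrite mulrCA.
Qed.

Lemma lin_sum (c : 'I_n -> R) (x : pt) (y : {set 'I_n} -> pt) :
  (forall i, x i = \sum_(I in B) y I i) -> lin c x = \sum_(I in B) lin c (y I).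
Proof.
move=> Hx; rewrite (@lin_comb _ B (fun _ => 1) y c x) ?(eq_bigr _ (fun I _ => mul1r _)) //.
by move=> i; rewrite Hx; apply: eq_bigr => I _; rewrite mul1r.
Qed.

Lemma simplex_le (c : 'I_n -> R) I y m :
  simplex I y -> (forall t, t \in I -> c t <= c m) -> lin c y <= c m.
Proof.
case=> lam [H0 [H1 Hy]] Hm.
rewrite (lin_comb c Hy) -[c m]mul1r -H1 mulr_suml.
apply: ler_sum => t tI; rewrite lin_unitv; apply: ler_wpM2l; [exact: H0|exact: Hm].
Qed.

Lemma simplex_eq (c : 'I_n -> R) I y m :
  simplex I y -> smax c I m -> lin c y = c m -> y = uv m.
Proof.
case=> lam [H0 [H1 Hy]] /andP [mI /forallP Hm] E.
have L : lin c y = \sum_(t in I) lam t * c t.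
  by rewrite (lin_comb c Hy); apply: eq_bigr => t _; rewrite lin_unitv.
have E2 : \sum_(t in I) lam t * (c m - c t) = 0.
  rewrite (eq_bigr _ (fun t _ => mulrBr _ _ _)) sumrB -mulr_suml H1 mul1r.
  by rewrite -L E subrr.
have Z t : t \in I -> t != m -> lam t = 0.
  move=> tI tm.
  have := psumr_eq0P _ E2 tI.
  have pos : 0 < c m - c t by rewrite subr_gt0; have := Hm t; rewrite tI tm.
  move=> /(_ _)/eqP; rewrite mulf_eq0 (gt_eqF pos) orbF => /(_ _)/eqP; apply.
  by move=> u uI; apply: mulr_ge0; [exact: H0| rewrite subr_ge0; case: (eqVneq u m) => [->//|um]; apply: ltW; have := Hm u; rewrite uI um].
have lm : lam m = 1.
  rewrite -H1 (bigD1 m) //= big1 ?addr0 // => t /andP [tI tm]; exact: Z.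
apply/ffunP => i; rewrite Hy (bigD1 m) //= big1 ?addr0 ?lm ?mul1r //.
by move=> t /andP [tI tm]; rewrite Z // mul0r.
Qed.

Lemma simplex_uv (I : {set 'I_n}) m : m \in I -> simplex I (uv m).
Proof.
move=> mI; exists (fun t => ((t == m) : nat)%:R); split; first by move=> t _; rewrite ler0n.
split.
  by rewrite (bigD1 m) //= eqxx big1 ?addr0 // => t /andP [_ /negbTE ->].
move=> i; rewrite (bigD1 m) //= eqxx mul1r big1 ?addr0 //.
by move=> t /andP [_ /negbTE ->]; rewrite mul0r.
Qed.

Lemma good_smax c (I : {set 'I_n}) : goodc c -> I \in B -> exists m, smax c I m /\ mu c I = Some m.
Proof.
move=> /forallP /(_ I) H IB; move: H; rewrite IB /= => /existsP [m Hm].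
by exists m; split => //; apply: mu_some.
Qed.

Lemma smax_le c (I : {set 'I_n}) m t : smax c I m -> t \in I -> c t <= c m.
Proof.
case/andP => _ /forallP H tI; case: (eqVneq t m) => [->//|tm].
by apply: ltW; have := H t; rewrite tI tm.
Qed.

Lemma smax_in c (I : {set 'I_n}) m : smax c I m -> m \in I.
Proof. by case/andP. Qed.

Lemma vert_in c : goodc c -> nestohedron B (vertOf (mu c)).
Proof.
move=> Hg; exists (yOf (mu c)); split; last by move=> i; rewrite ffunE.
move=> I IB; have [m [Hm E]] := good_smax Hg IB.
by rewrite (yOf_unit E); apply: simplex_uv; exact: smax_in Hm.
Qed.

Lemma vert_max c x : goodc c -> nestohedron B x -> x != vertOf (mu c) ->
  lin c x < lin c (vertOf (mu c)).
Proof.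
move=> Hg [y [Hs Hy]] ne.
have Lx := lin_sum c Hy.
have Lv : lin c (vertOf (mu c)) = \sum_(I in B) lin c (yOf (mu c) I).
  by apply: lin_sum => i; rewrite ffunE.
have D I : I \in B -> lin c (y I) <= lin c (yOf (mu c) I).
  move=> IB; have [m [Hm E]] := good_smax Hg IB.
  rewrite (yOf_unit E) lin_unitv; apply: simplex_le (Hs I IB) _.
  by move=> t; apply: smax_le.
rewrite lt_neqAle Lx Lv ler_sum // andbT; apply/negP => /eqP EE.
case/negP: ne; apply/eqP/ffunP => i; rewrite Hy ffunE; apply: eq_bigr => I IB.
have [m [Hm E]] := good_smax Hg IB.
have Z : \sum_(I in B) (lin c (yOf (mu c) I) - lin c (y I)) = 0.
  by rewrite sumrB EE subrr.
have nn J : J \in B -> 0 <= lin c (yOf (mu c) J) - lin c (y J).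
  by move/D; rewrite subr_ge0.
have := psumr_eq0P nn Z IB.
move/eqP; rewrite subr_eq0 (yOf_unit E) lin_unitv => /eqP /esym Ec.
by rewrite (simplex_eq (Hs I IB) Hm Ec).
Qed.

Lemma exists_max (c : 'I_n -> R) (I : {set 'I_n}) : I != set0 ->
  exists2 m, m \in I & forall j, j \in I -> c j <= c m.
Proof.
case/set0Pn => i0 Hi0.
pose h j := #|[set u in I | c u < c j]|.
case: (arg_maxnP h Hi0) => m Hm0 Hmax; have Hm : m \in I := Hm0; exists m => // j jI.
rewrite leNgt; apply/negP => lt.
have := Hmax j jI; rewrite /h; apply/negP; rewrite -ltnNge.
apply: proper_card; rewrite properE; apply/andP; split.
  apply/subsetP => u; rewrite !inE => /andP [-> /lt_trans]; exact.
apply/subsetP => /(_ m); rewrite !inE lt Hm ltxx /=; by move/(_ isT).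
Qed.

Lemma good_of_unique c x : nestohedron B x ->
  (forall y, nestohedron B y -> y <> x -> lin c y < lin c x) -> goodc c.
Proof.
move=> [y [Hs Hy]] H.
apply/forallP => I; apply/implyP => IB.
case: (boolP [exists m, smax c I m]) => // Hn; exfalso.
have [m mI Hm] := exists_max c (Bne IB).
have [j [jI jm cj]] : exists j, [/\ j \in I, j != m & c m <= c j].
  move/existsPn: Hn => /(_ m); rewrite /smax mI /= negb_forall => /existsP [j].
  rewrite negb_imply => /andP [jI]; rewrite negb_imply => /andP [jm]; rewrite -leNgt => le.
  by exists j.
pose z (k : 'I_n) : pt := [ffun i => \sum_(J in B) (if J == I then uv k else y J) i].
have Pz k : k \in I -> nestohedron B (z k).
  move=> kI; exists (fun J => if J == I then uv k else y J); split; last by move=> i; rewrite ffunE.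
  move=> J JB; case: eqP => [->|_]; [exact: simplex_uv | exact: Hs].
have zE k i : z k i = uv k i + \sum_(J in B | J != I) y J i.
  rewrite ffunE (bigD1 I) //= eqxx; congr (_ + _); apply: eq_bigr => J /andP [_ /negbTE ->] //.
have Lz k : c k = c m -> lin c x <= lin c (z k).
  move=> ck.
  have -> : lin c (z k) = c k + \sum_(J in B | J != I) lin c (y J).
    rewrite (@lin_sum c (z k) (fun J => if J == I then uv k else y J)); last by move=> i; rewrite ffunE.
    rewrite (bigD1 I) //= eqxx lin_unitv; congr (_ + _); apply: eq_bigr => J /andP [_ /negbTE ->] //.
  rewrite (lin_sum c Hy) (bigD1 I) //= lerD2r ck; apply: simplex_le (Hs I IB) _; exact: Hm.
have Lm := Lz m erefl.
have Lj : lin c x <= lin c (z j) by apply: Lz; apply/eqP; rewrite eq_le cj Hm.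
have zne : z m != z j.
  apply/eqP => /ffunP /(_ m); rewrite !zE => /addIr; rewrite !ffunE eqxx eq_sym (negbTE jm) /=.
  by move/eqP; rewrite oner_eq0.
case: (eqVneq (z m) x) => [E|ne].
  have nej : z j <> x by move=> E2; move: zne; rewrite E E2 eqxx.
  by have := H _ (Pz j jI) nej; rewrite ltNge Lj.
by have := H _ (Pz m mI) (elimN eqP ne); rewrite ltNge Lm.
Qed.

Lemma generic_good (f : 'I_n -> nat) :
  generic (@nestohedron R n B) f <-> goodc (fun i => (f i)%:R).
Proof.
split.
  by case=> x [Px H]; apply: (good_of_unique Px H).
move=> Hg; exists (vertOf (mu (fun i => (f i)%:R))); split; first exact: vert_in.
by move=> y Py ne; apply: vert_max => //; apply/eqP.
Qed.

Lemma vertex_iff x : is_vertex (@nestohedron R n B) x <->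
  exists c, goodc c /\ x = vertOf (mu c).
Proof.
split.
  case=> Px [c H]; have Hg := good_of_unique Px H.
  exists c; split => //; case: (eqVneq x (vertOf (mu c))) => // ne; exfalso.
  have H3 := vert_max Hg Px ne.
  have nE : vertOf (mu c) <> x by move=> E; move: ne; rewrite E eqxx.
  by have := H _ (vert_in Hg) nE; rewrite ltNge (ltW H3).
case=> c [Hg ->]; split; first exact: vert_in.
by exists c => y Py ne; apply: vert_max => //; apply/eqP.
Qed.

Lemma vert_inj c c' : goodc c -> goodc c' -> vertOf (mu c) = vertOf (mu c') -> mu c = mu c'.
Proof.
move=> Hg Hg' EV; apply/ffunP => I.
case: (boolP (I \in B)) => IB; last by rewrite !ffunE (negbTE IB).
have [m [Hm E]] := good_smax Hg IB; have [m' [Hm' E']] := good_smax Hg' IB.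
rewrite E E'; congr Some.
have Lv d : lin c' (vertOf (mu d)) = \sum_(J in B) lin c' (yOf (mu d) J).
  by apply: lin_sum => i; rewrite ffunE.
have D J : J \in B -> 0 <= lin c' (yOf (mu c') J) - lin c' (yOf (mu c) J).
  move=> JB; have [a [Ha Ea]] := good_smax Hg JB; have [b [Hb Eb]] := good_smax Hg' JB.
  rewrite (yOf_unit Ea) (yOf_unit Eb) !lin_unitv subr_ge0.
  by apply: smax_le Hb _; exact: smax_in Ha.
have Z : \sum_(J in B) (lin c' (yOf (mu c') J) - lin c' (yOf (mu c) J)) = 0.
  by rewrite sumrB -!Lv EV subrr.
have := psumr_eq0P D Z IB; move/eqP; rewrite subr_eq0 (yOf_unit E) (yOf_unit E') !lin_unitv.
move=> /eqP Ec; case: (eqVneq m m') => // ne; exfalso.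
case/andP: Hm' => _ /forallP /(_ m); rewrite (smax_in Hm) ne /= Ec ltxx //.
Qed.


End Geo.

Lemma size_le_sumn (a : seq nat) : all (fun x => 0 < x)%N a -> (size a <= sumn a)%N.
Proof. elim: a => //= x a IH /andP [x0 /IH]; lia. Qed.

Lemma mem_le_sumn (a : seq nat) x : x \in a -> (x <= sumn a)%N.
Proof.
elim: a => //= y a IH; rewrite inE => /orP [/eqP ->|/IH]; lia.
Qed.

Section Comb.
Variable n : nat.

Definition Lk (k : nat) : seq (seq nat) :=
  [seq map val (tval t) | t <- enum {: k.-tuple 'I_n.+1}].

Lemma Lk_uniq k : uniq (Lk k).
Proof.
rewrite map_inj_uniq ?enum_uniq // => t1 t2 E; apply: val_inj.
by apply: (inj_map val_inj).
Qed.

Lemma Lk_size k s : s \in Lk k -> size s = k.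
Proof. by case/mapP => t _ ->; rewrite size_map size_tuple. Qed.

Lemma flat_uniq m r : uniq (flatten [seq Lk k | k <- iota m r]).
Proof.
elim: r m => //= r IH m; rewrite cat_uniq Lk_uniq IH andbT /=.
apply/hasPn => s /flatten_mapP [k]; rewrite mem_iota => /andP [Hk _] Hs.
apply/negP => /Lk_size; rewrite (Lk_size Hs); lia.
Qed.

Lemma comps_uniq : uniq (comps n).
Proof. exact: filter_uniq (flat_uniq 0 n.+1). Qed.

Lemma comps_is (a : seq nat) : a \in comps n -> all (fun x => 0 < x)%N a /\ sumn a = n.
Proof. by rewrite mem_filter => /andP [/andP [H /eqP E] _]. Qed.

Lemma comps_mem (a : seq nat) : all (fun x => 0 < x)%N a -> sumn a = n -> a \in comps n.
Proof.
move=> Hp Hs; rewrite mem_filter /is_comp Hp Hs eqxx andTb.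
apply/flatten_mapP; exists (size a).
  by rewrite mem_iota add0n ltnS; have := size_le_sumn Hp; rewrite Hs.
apply/mapP; exists (map_tuple inord (in_tuple a)); first by rewrite mem_enum.
rewrite /= -map_comp -{1}(map_id a); apply/eq_in_map => x xa /=.
by rewrite inordK //; have := mem_le_sumn xa; rewrite Hs; lia.
Qed.

Lemma Mcoef_pad (a b : seq nat) : a \in comps n ->
  Mcoef (fun j : 'I_n.+1 => nth 0%N a j) b = ((a == b) : nat)%:Z.
Proof.
case/comps_is => Hp Hs; rewrite /Mcoef; congr ((_ : nat)%:Z); congr (nat_of_bool (_ == _)).
have Hsz : (size a <= n.+1)%N by have := size_le_sumn Hp; rewrite Hs; lia.
have -> : map (fun j : 'I_n.+1 => nth 0%N a j) (enum 'I_n.+1) = map (nth 0%N a) (iota 0 n.+1).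
  by rewrite -val_enum_ord -map_comp.
rewrite -(subnKC Hsz) iotaD map_cat filter_cat.
rewrite -/(mkseq _ _) mkseq_nth (all_filterP _) ?add0n.
  rewrite -[RHS]cats0; congr (_ ++ _).
  rewrite (eq_in_filter (a2 := pred0)) ?filter_pred0 //.
  move=> x /mapP [j]; rewrite mem_iota => /andP [Hj _] ->.
  by rewrite nth_default.
by apply/allP => x xa; rewrite lt0n_neq0 //; apply: (allP Hp).
Qed.

Definition fibc (g : {ffun 'I_n -> 'I_n.+1}) (j : 'I_n.+1) := #|[pred i | g i == j]|.
Definition fibeq (g : {ffun 'I_n -> 'I_n.+1}) (a : seq nat) :=
  [forall j : 'I_n.+1, fibc g j == nth 0%N a j].

Lemma fibc_gt0 (g : {ffun 'I_n -> 'I_n.+1}) j : (0 < fibc g j)%N = [exists t in setT, g t == j].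
Proof.
apply/idP/idP.
  by case/card_gt0P => t; rewrite inE => Ht; apply/existsP; exists t; rewrite inE.
by case/existsP => t /andP [_ Ht]; apply/card_gt0P; exists t; rewrite inE.
Qed.

Lemma hitE (g : {ffun 'I_n -> 'I_n.+1}) k j : img g setT k -> (0 < fibc g j)%N = (j < k)%N.
Proof. by move/forallP/(_ j)/eqP => ->; rewrite fibc_gt0. Qed.

Lemma img_uniq (g : {ffun 'I_n -> 'I_n.+1}) k1 k2 : img g setT k1 -> img g setT k2 ->
  (k1 <= n)%N -> (k2 <= n)%N -> k1 = k2.
Proof.
wlog: k1 k2 / (k1 <= k2)%N.
  move=> W H1 H2 l1 l2; case: (leqP k1 k2) => l; first exact: W.
  by apply/esym/W => //; apply: ltnW.
move=> l H1 H2 l1 l2; apply/eqP; rewrite eqn_leq l /=; rewrite leqNgt; apply/negP => lt.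
have i1 : (k1 < n.+1)%N by lia.
have := hitE (Ordinal i1) H1; rewrite (hitE _ H2) /= lt ltnn //.
Qed.

Lemma fib_img (g : {ffun 'I_n -> 'I_n.+1}) a : a \in comps n -> fibeq g a -> img g setT (size a).
Proof.
case/comps_is => Hp _ /forallP Hf; apply/forallP => i; apply/eqP.
rewrite -fibc_gt0 (eqP (Hf i)).
case: (ltnP i (size a)) => l.
  by apply/esym; apply: (allP Hp); apply: mem_nth.
by rewrite nth_default.
Qed.

Lemma sum_fibc (g : {ffun 'I_n -> 'I_n.+1}) : (\sum_(j < n.+1) fibc g j)%N = n.
Proof.
rewrite -[RHS](card_ord n) -sum1_card (partition_big g predT) //=.
by apply: eq_bigr => j _; rewrite sum1dep_card; apply: eq_card => i; rewrite !inE.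
Qed.

Lemma img_fib (g : {ffun 'I_n -> 'I_n.+1}) k : img g setT k -> (k <= n)%N ->
  let a0 := mkseq (fun j => fibc g (inord j)) k in
  [/\ a0 \in comps n, fibeq g a0 & size a0 = k].
Proof.
move=> Hi kn a0.
have Fa : fibeq g a0.
  apply/forallP => j; rewrite /a0; case: (ltnP j k) => l.
    by rewrite nth_mkseq // inord_val.
  rewrite nth_default ?size_mkseq //; apply/eqP.
  by apply/eqP; rewrite eqn0Ngt (hitE _ Hi) -leqNgt.
split => //; last by rewrite size_mkseq.
apply: comps_mem.
  apply/allP => x /mapP [j]; rewrite mem_iota add0n => /andP [_ l] ->.
  by rewrite (hitE _ Hi) inordK //; lia.
transitivity (\sum_(j < n.+1) fibc g j)%N; last exact: sum_fibc.
have -> : (\sum_(j < n.+1) fibc g j = \sum_(0 <= j < n.+1) fibc g (inord j))%N.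
  by rewrite big_mkord; apply: eq_bigr => j _; rewrite inord_val.
rewrite sumnE big_map (big_cat_nat _ (n := k)) //=; last lia.
rewrite [X in (_ + X)%N]big1_seq ?addn0; first by rewrite /index_iota subn0.
move=> j /andP [_]; rewrite mem_index_iota => /andP [l1 l2].
apply/eqP; rewrite eqn0Ngt (hitE _ Hi) inordK //; lia.
Qed.


Lemma comps_size a : a \in comps n -> (size a < n.+1)%N.
Proof. by case/comps_is => Hp Hs; have := size_le_sumn Hp; rewrite Hs ltnS. Qed.

Lemma L1 (g : {ffun 'I_n -> 'I_n.+1}) :
  \sum_(a <- comps n | fibeq g a) (-1) ^+ size a =
  \sum_(k < n.+1 | img g setT k) (-1) ^+ k :> int.
Proof.
case: (pickP (fun k : 'I_n.+1 => img g setT k)) => [k Hk|Hn]; last first.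
  rewrite [RHS]big_pred0 // [LHS]big1_seq // => a /andP [Hf Ha]; exfalso.
  by have := Hn (Ordinal (comps_size Ha)); rewrite /= (fib_img Ha Hf).
have kn : (k <= n)%N by rewrite -ltnS.
rewrite (bigD1 k) //= [X in _ = _ + X]big1 ?addr0; last first.
  move=> k' /andP [Hk' ne]; exfalso; move/negP: ne; apply; apply/eqP/val_inj.
  by apply: img_uniq Hk' Hk _ kn; rewrite -ltnS.
have [Ha0 Hf0 Hs0] := img_fib Hk kn.
rewrite big_mkcond (bigD1_seq _ Ha0 (comps_uniq)) /= Hf0 Hs0 big1_seq ?addr0 //.
move=> a /andP [ne Ha]; case: ifP => // Hf; exfalso; move/negP: ne; apply; apply/eqP.
have Es : size a = k by apply: img_uniq (fib_img Ha Hf) Hk _ kn; rewrite -ltnS comps_size.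
apply: (@eq_from_nth _ 0%N); first by rewrite Es size_mkseq.
move=> i; rewrite Es => ik.
have ilt : (i < n.+1)%N by lia.
move/forallP: Hf => /(_ (inord i)) /eqP; move/forallP: Hf0 => /(_ (inord i)) /eqP.
by rewrite inordK // => <- <-.
Qed.

End Comb.

Lemma pbP (P : Prop) : pb P <-> P.
Proof. by rewrite /pb; case: excluded_middle_informative. Qed.

Section Main.
Variables (R : realFieldType) (n : nat) (B : {set {set 'I_n}}).
Hypothesis Bne : forall I, I \in B -> I != set0.

Definition cg (g : {ffun 'I_n -> 'I_n.+1}) : 'I_n -> R := fun i => ((g i).+1)%:R.

Definition relOf (mu0 : {ffun {set 'I_n} -> option 'I_n}) : rel 'I_n :=
  fun a b => [exists I in B, [&& mu0 I == Some a, b \in I & b != a]].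

Lemma mu_smax (c : 'I_n -> R) I a : mu B c I = Some a -> I \in B /\ smax c I a.
Proof.
rewrite ffunE; case: (boolP (I \in B)) => // IB.
by case: pickP => // m Hm [<-].
Qed.

Lemma rel_real (c : 'I_n -> R) a b : relOf (mu B c) a b -> c b < c a.
Proof.
case/existsP => I /andP [IB /and3P [/eqP E bI ba]].
have [_ /andP [_ /forallP H]] := mu_smax E.
by have := H b; rewrite bI ba.
Qed.

Lemma key (c : 'I_n -> R) (g : {ffun 'I_n -> 'I_n.+1}) : goodc B c ->
  (goodc B (cg g) && (mu B (cg g) == mu B c)) =
  [forall a, forall b, [&& a \in setT, b \in setT & relOf (mu B c) a b] ==> (g b < g a)%N].
Proof.
move=> Hc; apply/idP/idP.
  case/andP => Hg /eqP E; apply/forallP => a; apply/forallP => b; apply/implyP.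
  case/and3P => _ _; rewrite -E => /rel_real; by rewrite /cg ltr_nat ltnS.
move=> /forallP H.
have Hs I : I \in B -> exists m, [/\ smax (cg g) I m, smax c I m & mu B c I = Some m].
  move=> IB; have [m [Hm E]] := good_smax Hc IB; exists m; split => //.
  apply/andP; split; first exact: smax_in Hm.
  apply/forallP => j; apply/implyP => jI; apply/implyP => jm.
  have := H m; move/forallP/(_ j); rewrite !inE /=.
  have -> : relOf (mu B c) m j by apply/existsP; exists I; rewrite IB E eqxx jI jm.
  by rewrite /cg ltr_nat ltnS.
have Hg : goodc B (cg g).
  apply/forallP => I; apply/implyP => IB; have [m [Hm _ _]] := Hs I IB.
  by apply/existsP; exists m.
rewrite Hg /=; apply/eqP/ffunP => I.
case: (boolP (I \in B)) => IB; last by rewrite !ffunE (negbTE IB).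
have [m [Hm _ E]] := Hs I IB; by rewrite E (mu_some IB Hm).
Qed.

End Main.

Lemma rank_lt (R : realFieldType) (n : nat) (c : 'I_n -> R) a b : c b < c a ->
  (#|[set u | (c u < c b)%R]| < #|[set u | (c u < c a)%R]|)%N.
Proof.
move=> lt; apply: proper_card; rewrite properE; apply/andP; split.
  by apply/subsetP => u; rewrite !inE => H; exact: lt_trans H lt.
apply/subsetP => /(_ b); rewrite !inE lt ltxx; by move/(_ isT).
Qed.

Lemma card_int (T : finType) (P : pred T) : (#|[set x | P x]|)%:Z = \sum_(x | P x) 1.
Proof. by rewrite -sum1dep_card -natz natr_sum. Qed.

End Helpers.
Import Helpers.

Theorem mainTheorem8 (R : realFieldType) (n : nat) (B : {set {set 'I_n}})
    (zeta : seq nat -> int) :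
  building_set B -> connected_bs B ->
  (* F(P_B) = sum_{alpha |= n} zeta_alpha M_alpha, compared monomial by monomial:
     g : [n] -> {0..N-1} encodes f = g + 1, i.e. the monomial x_{f(1)}...x_{f(n)} *)
  (forall (N : nat) (e : 'I_N -> nat),
     (#|[pred g : {ffun 'I_n -> 'I_N} |
          pb (generic (@nestohedron R n B) (fun i => (g i).+1) /\
              forall j : 'I_N, #|[pred i | g i == j]| = e j)]|)%:Z
     = \sum_(a <- comps n) zeta a * Mcoef e a) ->
  exists vs : seq {ffun 'I_n -> R},
    uniq vs /\ (forall x, x \in vs <-> is_vertex (@nestohedron R n B) x) /\
    \sum_(a <- comps n) (-1) ^+ size a * zeta a = (-1) ^+ n * (size vs)%:Z.
Proof.
move=> Hbs Hconn Hyp.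
have Bne : forall I, I \in B -> I != set0 by case: Hbs => _ [H _].
pose Mset := [set mu0 : {ffun {set 'I_n} -> option 'I_n} |
   pb (exists c : 'I_n -> R, goodc B c /\ mu B c = mu0)].
have MsetP mu0 : mu0 \in Mset <-> exists c : 'I_n -> R, goodc B c /\ mu B c = mu0.
  rewrite inE; split; [by move/pbP | by move=> H; apply/pbP].
exists [seq vertOf R B mu0 | mu0 <- enum Mset].
split.
  rewrite map_inj_in_uniq ?enum_uniq // => m1 m2.
  rewrite !mem_enum => /MsetP [c1 [H1 <-]] /MsetP [c2 [H2 <-]] E.
  exact: vert_inj H1 H2 E.
split.
  move=> x; rewrite vertex_iff //; split.
    by case/mapP => mu0; rewrite mem_enum => /MsetP [c [Hc <-]] ->; exists c.
  case=> c [Hc ->]; apply/mapP; exists (mu B c) => //; rewrite mem_enum; apply/MsetP; by exists c.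
rewrite size_map -cardE.
have Z a : a \in comps n ->
    zeta a = (#|[set g : {ffun 'I_n -> 'I_n.+1} | goodc B (cg R g) && fibeq g a]|)%:Z.
  move=> Ha; have := Hyp n.+1 (fun j => nth 0%N a j).
  rewrite (eq_bigr (fun b => zeta b * ((a == b) : nat)%:Z)); last by move=> b _; rewrite Mcoef_pad.
  rewrite (bigD1_seq a Ha (comps_uniq n)) /= eqxx mulr1 big1 ?addr0; last first.
    by move=> b /negbTE; rewrite eq_sym => ->; rewrite mulr0.
  move=> <-; congr Posz; apply: eq_card => g; rewrite !inE.
  apply/idP/idP.
    move/pbP => [/(generic_good R Bne) Hg Hf]; apply/andP; split; first exact: Hg.
    by apply/forallP => j; rewrite /fibc Hf.
  case/andP => Hg /forallP Hf; apply/pbP; split; first exact/(generic_good R Bne).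
  by move=> j; apply/eqP; have := Hf j; rewrite /fibc.
have -> : \sum_(a <- comps n) (-1) ^+ size a * zeta a =
    \sum_(a <- comps n) \sum_(g | goodc B (cg R g)) (if fibeq g a then (-1) ^+ size a else 0).
  apply: eq_big_seq => a Ha; rewrite (Z a Ha) card_int mulr_sumr big_mkcond [RHS]big_mkcond /=.
  apply: eq_bigr => g _; case: (goodc _ _); case: (fibeq _ _); by rewrite ?mulr1.
rewrite exchange_big /=.
rewrite (eq_bigr (fun g => \sum_(k < n.+1) (if img g setT k then (-1) ^+ k else 0))); last first.
  by move=> g _; rewrite -big_mkcond L1 big_mkcond.
rewrite exchange_big /=.
have Ec k : (#|[set g : {ffun 'I_n -> 'I_n.+1} | goodc B (cg R g) && img g setT k]| =
    \sum_(mu0 in Mset) #|SP n (relOf B mu0) setT k|)%N.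
  rewrite -sum1_card (partition_big (fun g => mu B (cg R g)) (mem Mset)) /=; last first.
    move=> g; rewrite inE => /andP [Hg _]; apply/MsetP; by exists (cg R g).
  apply: eq_bigr => mu0 /MsetP [c [Hc <-]].
  rewrite sum1dep_card; apply: eq_card => g; rewrite !inE.
  rewrite -andbA [img _ _ _ && _]andbC andbA key //.
  have -> : [forall t, (t \notin [set: 'I_n]) ==> (g t == ord0)] = true.
    by apply/forallP => t; rewrite inE.
  by rewrite andbC.
transitivity (\sum_(j < n.+1) (-1) ^+ j *
   (\sum_(mu0 in Mset) (#|SP n (relOf B mu0) setT j|)%:Z)).
  apply: eq_bigr => k _; rewrite -big_mkcondr /=.
  have -> : \sum_(mu0 in Mset) (#|SP n (relOf B mu0) setT k|)%:Z =
      (#|[set g : {ffun 'I_n -> 'I_n.+1} | goodc B (cg R g) && img g setT k]|)%:Z.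
    by rewrite Ec -natz natr_sum; apply: eq_bigr => mu0 _; rewrite natz.
  by rewrite card_int mulr_sumr; apply: eq_bigr => g _; rewrite mulr1.
under eq_bigr do rewrite mulr_sumr.
rewrite exchange_big /=.
rewrite (eq_bigr (fun _ => (-1) ^+ n)); last first.
  move=> mu0 /MsetP [c [Hc <-]].
  have := @recip _ n (relOf B (mu B c)) (fun t => #|[set u | (c u < c t)%R]|) _ _ setT.
  rewrite cardsT card_ord; apply; first by [].
  by move=> a b /rel_real; apply: rank_lt.
by rewrite sumr_const -mulr_natr natz.
Qed.
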